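(* If $\Gamma$ is a mutation-finite connected graph with at least $4$ vertices, then $\Gamma$ does not contain $\mathbf{Z}_3$ as a subgraph.
   Context: A graph here is a finite directed multigraph with no loops and no oriented $2$-cycles; multiple arrows in the same direction are allowed. The mutation $\mu_k\Gamma$ at a vertex $k$: for every pair of arrows $i\to k$, $k\to j$ add an arrow $i\to j$; reverse all arrows incident to $k$; then delete pairs of opposite arrows $i\to j$, $j\to i$ until no oriented $2$-cycles remain. $\Gamma$ is mutation-finite if only finitely many isomorphism classes of graphs are obtainable from it by sequences of mutations. Connected means the underlying undirected graph is connected. Subgraph always means full (induced) subgraph: a subset of the vertices together with all arrows between them. $\mathbf{Z}_3$ is the graph with three vertices $x_1,x_2,x_3$ and exactly two arrows $x_1\to x_2$, two arrows $x_2\to x_3$, and two arrows $x_3\to x_1$. *)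

(* Defs.v *)
From mathcomp Require Import all_boot all_fingroup.
Set Implicit Arguments. Unset Strict Implicit. Unset Printing Implicit Defensive.

(* A graph on the vertex set 'I_n is given by its arrow counts:
   arr i j = number of arrows i -> j. *)
Definition graph (n : nat) := 'I_n -> 'I_n -> nat.

Definition is_graph n (g : graph n) : Prop :=
  (forall i, g i i = 0) /\ (forall i j, g i j = 0 \/ g j i = 0).

(* Mutation at k: for i, j <> k, after adding g i k * g k j arrows i -> j
   (and g j k * g k i arrows j -> i), cancel opposite pairs;
   arrows incident to k are reversed. *)
Definition mutate n (k : 'I_n) (g : graph n) : graph n :=
  fun i j =>
    if (i == k) || (j == k) then g j i
    else (g i j + g i k * g k j) - (g j i + g j k * g k i).

Definition mutseq n (g : graph n) (s : seq 'I_n) : graph n :=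
  foldl (fun h k => mutate k h) g s.

Definition graph_iso n (g h : graph n) : Prop :=
  exists s : {perm 'I_n}, forall i j, h (s i) (s j) = g i j.

Definition mutation_finite n (g : graph n) : Prop :=
  exists (m : nat) (F : 'I_m -> graph n),
    forall s : seq 'I_n, exists t : 'I_m, graph_iso (mutseq g s) (F t).

Definition undirected_adj n (g : graph n) : rel 'I_n :=
  fun i j => (0 < g i j) || (0 < g j i).

Definition connected_graph n (g : graph n) : Prop :=
  forall i j, connect (undirected_adj g) i j.

Definition contains_Z3 n (g : graph n) : Prop :=
  exists x1 x2 x3 : 'I_n,
    [/\ x1 != x2, x2 != x3 & x3 != x1] /\
    [/\ g x1 x2 = 2, g x2 x3 = 2 & g x3 x1 = 2] /\
    [/\ g x2 x1 = 0, g x3 x2 = 0 & g x1 x3 = 0].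

(* Main.v *)
Require Import Defs.
From mathcomp Require Import all_boot all_fingroup.
From mathcomp Require Import zify.
Set Implicit Arguments. Unset Strict Implicit. Unset Printing Implicit Defensive.
Set Warnings "-notation-overridden".

Definition cycP n (h : graph n) (p q r : 'I_n) (a b c : nat) : Prop :=
  [/\ p != q, q != r & r != p] /\ [/\ h p q = a, h q r = b & h r p = c] /\
  [/\ h q p = 0, h r q = 0 & h p r = 0].

Definition CertP n (h : graph n) p q r a b c : Prop :=
  cycP h p q r a b c /\ [/\ 2 <= a, 2 <= b, 2 <= c & 7 <= a + b + c].

Lemma cyc_step n (h : graph n) p q r a b c : cycP h p q r a b c -> c <= a * b ->
  cycP (mutate q h) p r q (a * b - c) b a.
Proof.
move=> [[npq nqr nrp] [[e1 e2 e3] [z1 z2 z3]]] hc.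
have nqp : q != p by rewrite eq_sym.
have nrq : r != q by rewrite eq_sym.
have npr : p != r by rewrite eq_sym.
rewrite /cycP; rewrite /mutate ?eqxx ?orbT ?(negbTE npq) ?(negbTE nqr) ?(negbTE nrp)
  ?(negbTE nqp) ?(negbTE nrq) ?(negbTE npr) /=.
rewrite e1 e2 e3 z1 z2 z3; split; first by [].
split; split => //; lia.
Qed.

Lemma cyc_rot n (h : graph n) p q r a b c : cycP h p q r a b c -> cycP h q r p b c a.
Proof. by move=> [[? ? ?] [[? ? ?] [? ? ?]]]. Qed.

Lemma grow1 n (h : graph n) p q r a b c : CertP h p q r a b c ->
  exists k p' q' r' a' b' c', CertP (mutate k h) p' q' r' a' b' c' /\ a + b + c < a' + b' + c'.
Proof.
move=> [hc [ha hb hc2 hs]].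
have key : forall x y z, z <= x -> z <= y -> 2 <= z -> 7 <= x + y + z ->
   2 * z < x * y /\ z + 2 <= x * y.
  move=> x y z hx hy hz hs'.
  have hxy : z * y <= x * y by rewrite leq_mul2r hx orbT.
  have hzz : z * z <= z * y by rewrite leq_mul2l hy orbT.
  case: (ltnP 2 z) => hz3; first by nia.
  have -> : z = 2 by lia.
  nia.
have [hmin|hmin] : (c <= a /\ c <= b) \/ (a <= b /\ a <= c) \/ (b <= a /\ b <= c) by lia.
  have [k1 k2] := key a b c hmin.1 hmin.2 hc2 hs.
  exists q, p, r, q, (a * b - c), b, a; split; last by lia.
  split; first by apply: cyc_step => //; lia.
  split; lia.
case: hmin => hmin.
  have [k1 k2] := key b c a hmin.1 hmin.2 ha (ltac:(lia)).
  exists r, q, p, r, (b * c - a), c, b; split; last by lia.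
  split; first by apply: cyc_step; [apply: cyc_rot | lia].
  split; lia.
have [k1 k2] := key c a b hmin.2 hmin.1 hb (ltac:(lia)).
exists p, r, q, p, (c * a - b), a, c; split; last by lia.
split; first by apply: cyc_step; [do 2 apply: cyc_rot | lia].
split; lia.
Qed.

Lemma growN n (h : graph n) p q r a b c N : CertP h p q r a b c ->
  exists s p' q' r' a' b' c', CertP (mutseq h s) p' q' r' a' b' c' /\ N <= a' + b' + c'.
Proof.
move=> hC; elim: N => [|N [s [p' [q' [r' [a' [b' [c' [hC' hN]]]]]]]]].
  by exists [::], p, q, r, a, b, c; split.
have [k [p2 [q2 [r2 [a2 [b2 [c2 [hC2 hlt]]]]]]]] := grow1 hC'.
exists (rcons s k), p2, q2, r2, a2, b2, c2; split; last by lia.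
by rewrite /mutseq foldl_rcons.
Qed.

Lemma mf_bound n (g : graph n) : mutation_finite g ->
  exists B, forall s i j, mutseq g s i j <= B.
Proof.
case=> m [F HF].
exists (\max_(t < m) \max_(i : 'I_n) \max_(j : 'I_n) F t i j) => s i j.
case: (HF s) => t [sg Hsg]; rewrite -Hsg.
apply: leq_trans (leq_bigmax t).
apply: leq_trans (leq_bigmax (sg i)).
exact: (leq_bigmax (sg j)).
Qed.

Lemma cert_contra n (g : graph n) s0 p q r a b c :
  mutation_finite g -> CertP (mutseq g s0) p q r a b c -> False.
Proof.
move=> /mf_bound [B HB] hC.
have [s [p' [q' [r' [a' [b' [c' [[[_ [[e1 e2 e3] _]] _] hN]]]]]]]] := growN (3 * B + 3) hC.
have h1 := HB (s0 ++ s) p' q'; have h2 := HB (s0 ++ s) q' r'; have h3 := HB (s0 ++ s) r' p'.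
rewrite /mutseq foldl_cat -/(mutseq g s0) -/(mutseq (mutseq g s0) s) in h1 h2 h3.
lia.
Qed.

Definition g4 := nat -> nat -> nat.
Definition mut4 (k : nat) (G : g4) : g4 := fun i j =>
  if (i == k) || (j == k) then G j i
  else (G i j + G i k * G k j) - (G j i + G j k * G k i).
Definition mseq4 (G : g4) (s : seq nat) : g4 := foldl (fun h k => mut4 k h) G s.

Definition mk (a1 b1 a2 b2 a3 b3 : nat) : g4 := fun i j =>
  match i, j with
  | 0, 1 => 2 | 1, 2 => 2 | 2, 0 => 2
  | 3, 0 => a1 | 0, 3 => b1 | 3, 1 => a2 | 1, 3 => b2 | 3, 2 => a3 | 2, 3 => b3
  | _, _ => 0 end.

Definition cert4 (G : g4) : bool :=
  has (fun p => has (fun q => has (fun r =>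
    [&& p != q, q != r, r != p, 2 <= G p q, 2 <= G q r, 2 <= G r p,
        G q p == 0, G r q == 0, G p r == 0 & 7 <= G p q + G q r + G r p])
  (iota 0 4)) (iota 0 4)) (iota 0 4).

Lemma cert4_intro (G : g4) p q r : p < 4 -> q < 4 -> r < 4 ->
  p != q -> q != r -> r != p -> 2 <= G p q -> 2 <= G q r -> 2 <= G r p ->
  G q p = 0 -> G r q = 0 -> G p r = 0 -> 7 <= G p q + G q r + G r p -> cert4 G.
Proof.
move=> hp hq hr n1 n2 n3 l1 l2 l3 z1 z2 z3 hs.
apply/hasP; exists p; first by rewrite mem_iota.
apply/hasP; exists q; first by rewrite mem_iota.
apply/hasP; exists r; first by rewrite mem_iota.
by rewrite n1 n2 n3 l1 l2 l3 z1 z2 z3 hs.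
Qed.

Lemma cert4_elim (G : g4) : cert4 G -> exists p q r, [/\ p < 4, q < 4 & r < 4] /\
  [/\ p != q, q != r & r != p] /\ [/\ 2 <= G p q, 2 <= G q r & 2 <= G r p] /\
  [/\ G q p = 0, G r q = 0 & G p r = 0] /\ 7 <= G p q + G q r + G r p.
Proof.
move=> /hasP [p]; rewrite mem_iota => /andP [_ hp].
move=> /hasP [q]; rewrite mem_iota => /andP [_ hq].
move=> /hasP [r]; rewrite mem_iota => /andP [_ hr].
move=> /andP[n1 /andP[n2 /andP[n3 /andP[l1 /andP[l2 /andP[l3 /andP[/eqP z1 /andP[/eqP z2 /andP[/eqP z3 hs]]]]]]]]].
by exists p, q, r.
Qed.

Definition seqs : seq (seq nat) :=
  [::] :: [seq [:: k] | k <- iota 0 4] ++ [seq [:: k; l] | k <- iota 0 4, l <- iota 0 4].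

Lemma seqs_ok : all (fun s => all (fun k => k < 4) s) seqs.
Proof. by vm_compute. Qed.

Definition valid (a b : nat) := (a == 0) || (b == 0).

Lemma small_ok : all (fun a1 => all (fun b1 => all (fun a2 => all (fun b2 =>
  all (fun a3 => all (fun b3 =>
   if [&& valid a1 b1, valid a2 b2, valid a3 b3 & 0 < a1 + b1 + a2 + b2 + a3 + b3] then
   has (fun s => cert4 (mseq4 (mk a1 b1 a2 b2 a3 b3) s)) seqs else true)
  (iota 0 3)) (iota 0 3)) (iota 0 3)) (iota 0 3)) (iota 0 3)) (iota 0 3).
Proof. vm_compute. reflexivity. Qed.

Ltac bigc s p q r :=
  exists s; split; [by [] | apply: (@cert4_intro _ p q r); rewrite /mseq4 /mut4 /mk /=; lia].

Lemma key4 a1 b1 a2 b2 a3 b3 : (a1 = 0 \/ b1 = 0) -> (a2 = 0 \/ b2 = 0) -> (a3 = 0 \/ b3 = 0) ->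
  0 < a1 + b1 + a2 + b2 + a3 + b3 ->
  exists s, all (fun k => k < 4) s /\ cert4 (mseq4 (mk a1 b1 a2 b2 a3 b3) s).
Proof.
move=> v1 v2 v3 hpos.
case: (leqP 3 b1) => hb1.
  case: (leqP 2 a3) => h; [bigc (Nil nat) 2 0 3 | bigc [:: 0] 0 2 3].
case: (leqP 3 b2) => hb2.
  case: (leqP 2 a1) => h; [bigc (Nil nat) 0 1 3 | bigc [:: 1] 1 0 3].
case: (leqP 3 b3) => hb3.
  case: (leqP 2 a2) => h; [bigc (Nil nat) 1 2 3 | bigc [:: 2] 2 1 3].
case: (leqP 3 a1) => ha1.
  case: (leqP 2 b2) => h; [bigc (Nil nat) 0 1 3 | bigc [:: 0] 1 0 3].
case: (leqP 3 a2) => ha2.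
  case: (leqP 2 b3) => h; [bigc (Nil nat) 1 2 3 | bigc [:: 1] 2 1 3].
case: (leqP 3 a3) => ha3.
  case: (leqP 2 b1) => h; [bigc (Nil nat) 2 0 3 | bigc [:: 2] 0 2 3].
have := small_ok.
have mi : forall x, x < 3 -> x \in iota 0 3 by move=> x hx; rewrite mem_iota.
move=> /allP /(_ a1 (mi _ ha1)) /allP /(_ b1 (mi _ hb1)) /allP /(_ a2 (mi _ ha2))
  /allP /(_ b2 (mi _ hb2)) /allP /(_ a3 (mi _ ha3)) /allP /(_ b3 (mi _ hb3)).
have -> : [&& valid a1 b1, valid a2 b2, valid a3 b3 & 0 < a1 + b1 + a2 + b2 + a3 + b3].
  rewrite /valid hpos; case: v1 => ->; case: v2 => ->; case: v3 => ->; by rewrite ?orbT.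
move=> /hasP [s hs hc]; exists s; split => //.
by move/allP: seqs_ok => /(_ s hs).
Qed.

Lemma restr n (g : graph n) (f : nat -> 'I_n) (G : g4) s :
  (forall i k, i < 4 -> k < 4 -> (f i == f k) = (i == k)) ->
  (forall i j, i < 4 -> j < 4 -> g (f i) (f j) = G i j) ->
  all (fun k => k < 4) s ->
  forall i j, i < 4 -> j < 4 -> mutseq g (map f s) (f i) (f j) = mseq4 G s i j.
Proof.
move=> Hinj; elim: s g G => [|k s IH] g G Hg //=.
move=> /andP [hk hs]; apply: IH => // i j hi hj.
rewrite /mutate /mut4 !Hinj //.
by case: ifP => _; rewrite !Hg.
Qed.

Lemma exit_path (T : finType) (e : rel T) (X : pred T) x p :
  X x -> path e x p -> ~~ X (last x p) -> exists u v, [/\ X u, ~~ X v & e u v].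
Proof.
elim: p x => [|y p IH] x hx /=; first by rewrite hx.
move=> /andP [exy hp] hl.
case hy: (X y); first exact: IH hy hp hl.
by exists x, y; rewrite hy.
Qed.

Theorem lemma6 (n : nat) (g : graph n) :
  is_graph g -> mutation_finite g -> connected_graph g -> 4 <= n ->
  ~ contains_Z3 g.
Proof.
move=> [gdiag g2] hmf hconn hn [x1 [x2 [x3 [[n12 n23 n31] [[e12 e23 e31] [z21 z32 z13]]]]]].
pose X : pred 'I_n := fun w => (w == x1) || (w == x2) || (w == x3).
have [w hw] : exists w, ~~ X w.
  apply/existsP; rewrite -negb_forall; apply/negP => /forallP hall.
  have : n <= #|[:: x1; x2; x3]|.
    rewrite -{1}(card_ord n); apply: subset_leq_card; apply/subsetP => y _.
    by have := hall y; rewrite /X !inE -orbA.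
  move=> h; have h2 := leq_trans h (card_size [:: x1; x2; x3]); move: h2 => /= h2; lia.
have [u [v [hu hv huv]]] : exists u v, [/\ X u, ~~ X v & undirected_adj g u v].
  have := hconn x1 w => /connectP [p hp hl].
  by apply: (exit_path (x := x1) (p := p)); rewrite /X ?eqxx // -hl.
move: hv; rewrite /X !negb_or => /andP [/andP [nv1 nv2] nv3].
pose f (i : nat) : 'I_n := nth v [:: x1; x2; x3; v] i.
have n21 : x2 != x1 by rewrite eq_sym.
have n32 : x3 != x2 by rewrite eq_sym.
have n13 : x1 != x3 by rewrite eq_sym.
have n1v : x1 != v by rewrite eq_sym.
have n2v : x2 != v by rewrite eq_sym.
have n3v : x3 != v by rewrite eq_sym.
have Hinj : forall i k, i < 4 -> k < 4 -> (f i == f k) = (i == k).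
  move=> [|[|[|[|i]]]] [|[|[|[|k]]]] //= _ _;
  by rewrite ?eqxx ?(negbTE n12) ?(negbTE n23) ?(negbTE n31) ?(negbTE n21)
    ?(negbTE n32) ?(negbTE n13) ?(negbTE n1v) ?(negbTE n2v) ?(negbTE n3v)
    ?(negbTE nv1) ?(negbTE nv2) ?(negbTE nv3).
pose G := mk (g v x1) (g x1 v) (g v x2) (g x2 v) (g v x3) (g x3 v).
have Hg : forall i j, i < 4 -> j < 4 -> g (f i) (f j) = G i j.
  by move=> [|[|[|[|i]]]] [|[|[|[|j]]]] //= _ _; rewrite ?gdiag.
have v1 : g v x1 = 0 \/ g x1 v = 0 := g2 v x1.
have v2 : g v x2 = 0 \/ g x2 v = 0 := g2 v x2.
have v3 : g v x3 = 0 \/ g x3 v = 0 := g2 v x3.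
have hpos : 0 < g v x1 + g x1 v + g v x2 + g x2 v + g v x3 + g x3 v.
  move: hu huv; rewrite /X /undirected_adj => /orP [/orP [] | ] /eqP -> /orP [] h; clear -h; lia.
have [s [hs hc]] := key4 v1 v2 v3 hpos.
have [p [q [r [[hp hq hr] [[d1 d2 d3] [[l1 l2 l3] [[z1 z2 z3] hsum]]]]]]] := cert4_elim hc.
have R := restr Hinj Hg hs.
apply: (@cert_contra n g (map f s) (f p) (f q) (f r)
  (mseq4 G s p q) (mseq4 G s q r) (mseq4 G s r p) hmf).
split; last by split.
split; first by rewrite !Hinj.
split; first by split; rewrite R.
by split; rewrite R.
Qed.
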